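(* For any $\epsilon>0$ consider, for $r\geqslant 0$, \[ \begin{aligned} \overline u_{\rm in,\epsilon}(r) &=L(r^2+\epsilon)^{-\frac{m}{2}}, \\ \overline v_{\rm in,\epsilon}(r) &=m(n-2-m) L(r^2+\epsilon)^{-\frac{m+2}{2}}, \\ \overline w_{\rm in,\epsilon}(r) &=m(m+2)(n-2-m)(n-4-m) L(r^2+\epsilon)^{-\frac{m+4}{2}}. \end{aligned} \] Then for all $r>0$, \[ -\Delta \overline u_{\rm in,\epsilon} \geqslant \overline v_{\rm in,\epsilon},\qquad -\Delta \overline v_{\rm in,\epsilon} \geqslant \overline w_{\rm in,\epsilon},\qquad -\Delta \overline w_{\rm in,\epsilon} \geqslant \overline u_{\rm in,\epsilon}^p . \]
   Context: Let $n\geqslant 15$ and $p>p_{\mathsf{JL}}(6,n)$, where $p_{\mathsf{JL}}(6,n)=\frac{(n+4)\sqrt{3} - \sqrt{\sqrt[3]{K_0+K_1}+ \sqrt[3]{K_0-K_1} + 3n^2+32 }}{(n-8)\sqrt{3} - \sqrt{\sqrt[3]{K_0+K_1} + \sqrt[3]{K_0-K_1} + 3n^2+32 }}$ with $2K_0 =-27n^6+324 n^5-756n^4-2592 n^3 + 25776 n^2 +5184 n -23744$, $2K_1 = \sqrt{(2K_0)^2 - 4(192n^2+256)^3}$. Let $m=6/(p-1)$ and $L=\big(m(m+2)(m+4)(n-2-m)(n-4-m)(n-6-m)\big)^{1/(p-1)}$. For a function $f$ of $r=|x|$, $\Delta f$ denotes the Laplacian in $\mathbf R^n$ of $x\mapsto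 f(|x|)$, i.e. $f''+\frac{n-1}{r}f'$. *)

(* Defs.v *)
From Stdlib Require Import Reals Lra.
From Coquelicot Require Import Coquelicot.
Open Scope R_scope.

Definition cbrt (x : R) : R :=
  if Rle_dec 0 x then Rpower x (1/3) else - Rpower (- x) (1/3).

Definition K0 (n : R) : R :=
  (-27*n^6 + 324*n^5 - 756*n^4 - 2592*n^3 + 25776*n^2 + 5184*n - 23744) / 2.

Definition K1 (n : R) : R :=
  sqrt ((2 * K0 n)^2 - 4 * (192*n^2 + 256)^3) / 2.

Definition pJL6 (n : R) : R :=
  let S := sqrt (cbrt (K0 n + K1 n) + cbrt (K0 n - K1 n) + 3*n^2 + 32) in
  ((n + 4) * sqrt 3 - S) / ((n - 8) * sqrt 3 - S).

Definition mexp (p : R) : R := 6 / (p - 1).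

Definition Lconst (n p : R) : R :=
  let m := mexp p in
  Rpower (m*(m+2)*(m+4)*(n-2-m)*(n-4-m)*(n-6-m)) (1/(p-1)).

Definition u_in (n p eps r : R) : R :=
  Lconst n p * Rpower (r^2 + eps) (- mexp p / 2).
Definition v_in (n p eps r : R) : R :=
  let m := mexp p in m*(n-2-m) * Lconst n p * Rpower (r^2 + eps) (- (m+2) / 2).
Definition w_in (n p eps r : R) : R :=
  let m := mexp p in
  m*(m+2)*(n-2-m)*(n-4-m) * Lconst n p * Rpower (r^2 + eps) (- (m+4) / 2).

Definition radial_lap (n : R) (f : R -> R) (r : R) : R :=
  Derive (Derive f) r + (n - 1) / r * Derive f r.

(* Main.v *)
Require Import Defs.
From Stdlib Require Import Reals Lra Psatz FunctionalExtensionality.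
From Coquelicot Require Import Coquelicot.
Open Scope R_scope.

Lemma Rpower_sub1 (q c : R) : 0 < q -> Rpower q (c - 1) * q = Rpower q c.
Proof.
  intros Hq. rewrite <- (Rpower_1 q Hq) at 2. rewrite <- Rpower_plus. f_equal; ring.
Qed.

Lemma der_pow (eps c r : R) : 0 < eps ->
  is_derive (fun r => Rpower (r^2 + eps) c) r (c * (2 * r) * Rpower (r^2+eps) (c - 1)).
Proof.
  intros He. assert (Hq : 0 < r^2 + eps) by nra.
  replace (Rpower (r^2+eps) (c-1)) with (Rpower (r^2+eps) c / (r^2+eps))
    by (rewrite <- (Rpower_sub1 _ c Hq); field; lra).
  unfold Rpower. auto_derive. lra. replace (r*(r*1)) with (r^2) by ring. field. lra.
Qed.

Lemma Derive_Kpow (eps K c : R) : 0 < eps ->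
  Derive (fun r => K * Rpower (r^2 + eps) c) = fun r => (K * c * 2) * (r * Rpower (r^2+eps) (c - 1)).
Proof.
  intros He. apply functional_extensionality. intros r.
  apply is_derive_unique.
  evar (l : R). replace ((K * c * 2) * (r * Rpower (r^2+eps) (c - 1))) with (K * l).
  apply (is_derive_scal (fun r => Rpower (r^2 + eps) c)). unfold l. apply der_pow; auto.
  unfold l. ring.
Qed.

Lemma lap_Kpow (N eps K c r : R) : 0 < eps -> 0 < r ->
  - radial_lap N (fun r => K * Rpower (r^2 + eps) c) r =
  K * Rpower (r^2+eps) (c - 2) * (-2*c*N*(r^2+eps) - 4*c*(c-1)*r^2).
Proof.
  intros He Hr. assert (Hq : 0 < r^2 + eps) by nra.
  unfold radial_lap. rewrite Derive_Kpow; auto.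
  assert (H1 : is_derive (fun r => r * Rpower (r^2+eps) (c-1)) r
     (1 * Rpower (r^2+eps) (c-1) + r * ((c-1) * (2*r) * Rpower (r^2+eps) (c-1-1)))).
  { apply (is_derive_mult (fun r => r) (fun r => Rpower (r^2+eps) (c-1))).
    exact (@is_derive_id R_AbsRing r). apply der_pow; auto. intros; apply Rmult_comm. }
  rewrite (Derive_scal (fun r => r * Rpower (r^2+eps) (c-1))).
  assert (Hd : Derive (fun r0 : R => r0 * Rpower (r0 ^ 2 + eps) (c - 1)) r =
     (1 * Rpower (r^2+eps) (c-1) + r * ((c-1) * (2*r) * Rpower (r^2+eps) (c-1-1))))
   by (apply is_derive_unique; exact H1).
  rewrite Hd.
  rewrite <- (Rpower_sub1 _ (c-1) Hq).
  replace (c-1-1) with (c-2) by ring.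
  field. lra.
Qed.
Definition poly_K0neg (x:R) : R := (102676259/2)*x^0 + 26091693*x^1 + (10679589/2)*x^2 + 570726*x^3 + (67581/2)*x^4 + 1053*x^5 + (27/2)*x^6.
Definition poly_disc (x:R) : R := (10214160759983817/4)*x^0 + 2646365462602407*x^1 + (2447267074302177/2)*x^2 + 336769112015091*x^3 + (246965545626615/4)*x^4 + 7965902907054*x^5 + 742924976247*x^6 + 50520316734*x^7 + (9951685191/4)*x^8 + 86572395*x^9 + (4042305/2)*x^10 + 28431*x^11 + (729/4)*x^12.
Definition poly_hM (x:R) : R := 66339*x^0 + 22959450*x^1 + 7960869*x^2 + 1058508*x^3 + 67581*x^4 + 2106*x^5 + 27*x^6.
Definition poly_Mgt (x:R) : R := 139776*x^0 + 30720*x^1 + 1536*x^2.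

Lemma pow_nonneg_all (x : R) : 0 <= x -> forall k:nat, 0 <= x^k.
Proof. intros; apply pow_le; auto. Qed.

Ltac polypos x Hx :=
  let H := fresh in pose proof (pow_nonneg_all x Hx) as H;
  pose proof (H 1%nat); pose proof (H 2%nat); pose proof (H 3%nat); pose proof (H 4%nat);
  pose proof (H 5%nat); pose proof (H 6%nat); pose proof (H 7%nat); pose proof (H 8%nat);
  pose proof (H 9%nat); pose proof (H 10%nat); pose proof (H 11%nat); pose proof (H 12%nat);
  simpl pow in *; lra.

Lemma K0_neg (N : R) : 15 <= N -> K0 N < 0.
Proof.
  intros HN. assert (E : K0 N = - poly_K0neg (N - 15)) by (unfold K0, poly_K0neg; field).
  assert (0 < poly_K0neg (N-15)); [|lra].
  unfold poly_K0neg. set (x := N - 15). assert (Hx : 0 <= x) by (unfold x; lra).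
  clearbody x. polypos x Hx.
Qed.

Lemma disc_pos (N : R) : 15 <= N -> K0 N ^ 2 - (192*N^2+256)^3 > 0.
Proof.
  intros HN. assert (E : K0 N ^ 2 - (192*N^2+256)^3 = poly_disc (N - 15)) by (unfold K0, poly_disc; field).
  rewrite E. unfold poly_disc. set (x := N - 15). assert (Hx : 0 <= x) by (unfold x; lra).
  clearbody x. polypos x Hx.
Qed.

Lemma hM_neg (N : R) : 15 <= N ->
  (48*N-160)^3 - 3*(192*N^2+256)*(48*N-160) + 2 * K0 N < 0.
Proof.
  intros HN. assert (E : (48*N-160)^3 - 3*(192*N^2+256)*(48*N-160) + 2 * K0 N = - poly_hM (N - 15)) by (unfold K0, poly_hM; field).
  rewrite E. assert (0 < poly_hM (N-15)); [|lra]. unfold poly_hM. set (x := N - 15). assert (Hx : 0 <= x) by (unfold x; lra).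
  clearbody x. polypos x Hx.
Qed.

Lemma cube_inj (a b : R) : 0 < a -> 0 < b -> a^3 = b^3 -> a = b.
Proof.
  intros Ha Hb H. destruct (Rtotal_order a b) as [h|[h|h]]; auto.
  - assert (0 < (b-a)*(b^2+a*b+a^2)) by (apply Rmult_lt_0_compat; nra). nra.
  - assert (0 < (a-b)*(b^2+a*b+a^2)) by (apply Rmult_lt_0_compat; nra). nra.
Qed.

Lemma rp3_cube (y : R) : 0 < y -> Rpower y (1/3) ^ 3 = y.
Proof.
  intros Hy. rewrite <- Rpower_pow by (apply exp_pos).
  rewrite Rpower_mult. replace (1/3 * INR 3) with 1 by (simpl; field). apply Rpower_1; auto.
Qed.

Lemma cbrt_sum_bound (N : R) : 15 <= N ->
  cbrt (K0 N + K1 N) + cbrt (K0 N - K1 N) < 160 - 48 * N.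
Proof.
  intros HN.
  pose proof (K0_neg N HN) as HK0. pose proof (disc_pos N HN) as Hd.
  set (Q := 192*N^2+256). fold Q in Hd.
  assert (HQ : 0 < Q) by (unfold Q; nra).
  set (k0 := K0 N) in *.
  assert (HK1 : K1 N ^ 2 = k0^2 - Q^3).
  { unfold K1. fold k0. set (d := (2*k0)^2 - 4*(192*N^2+256)^3).
    assert (0 <= d) by (unfold d; fold Q; nra).
    replace ((sqrt d / 2)^2) with (sqrt d * sqrt d / 4) by field.
    rewrite sqrt_sqrt by auto. unfold d; fold Q; field. }
  assert (HK1p : 0 <= K1 N) by (unfold K1; pose proof (sqrt_pos ((2 * K0 N) ^ 2 - 4 * (192 * N ^ 2 + 256) ^ 3)); lra).
  set (k1 := K1 N) in *.
  assert (HQ3 : 0 < Q^3) by (apply pow_lt; auto).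
  assert (Hlt : k1 < - k0) by nra.
  assert (HX : 0 < -(k0 + k1)) by lra. assert (HY : 0 < -(k0 - k1)) by lra.
  unfold cbrt. destruct (Rle_dec 0 (k0+k1)); [lra|]. destruct (Rle_dec 0 (k0-k1)); [lra|].
  set (a := Rpower (-(k0+k1)) (1/3)). set (b := Rpower (-(k0-k1)) (1/3)).
  assert (Ha : 0 < a) by apply exp_pos. assert (Hb : 0 < b) by apply exp_pos.
  assert (Ha3 : a^3 = -(k0+k1)) by (apply rp3_cube; auto).
  assert (Hb3 : b^3 = -(k0-k1)) by (apply rp3_cube; auto).
  assert (Hab : a*b = Q).
  { apply cube_inj; [nra|auto|]. rewrite Rpow_mult_distr, Ha3, Hb3. nra. }
  set (s := a + b).
  assert (Hs3 : s^3 = -2*k0 + 3*Q*s).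
  { unfold s. replace ((a+b)^3) with (a^3 + b^3 + 3*(a*b)*(a+b)) by ring. rewrite Ha3, Hb3, Hab. ring. }
  assert (Hs2 : s^2 >= 4*Q) by (unfold s; rewrite <- Hab; pose proof (pow2_ge_0 (a-b)); nra).
  pose proof (hM_neg N HN) as Hh. fold Q k0 in Hh.
  set (M := 48*N-160) in *.
  assert (s > M).
  { destruct (Rle_or_lt s M) as [Hle|]; [|lra].
    assert (Hs : 0 < s) by (unfold s; lra).
    assert (M^3 - 3*Q*M + 2*k0 - (s^3 - 3*Q*s + 2*k0) = (M-s)*(M^2+M*s+s^2-3*Q)) by ring.
    assert (0 <= (M-s)*(M^2+M*s+s^2-3*Q)).
    { apply Rmult_le_pos; [lra|]. assert (0 <= M*s) by (apply Rmult_le_pos; lra). assert (0 <= M^2) by apply pow2_ge_0. lra. }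
    assert (Hz : s^3 - 3*Q*s + 2*k0 = 0) by (rewrite Hs3; ring). rewrite Hz in H. clearbody M s. exfalso. lra. }
  unfold s, M in *. clearbody a b. lra.
Qed.

Lemma pJL_bound (N p : R) : 15 <= N -> pJL6 N < p -> 1 < p /\ 6/(p-1) < N - 6.
Proof.
  intros HN Hp. pose proof (cbrt_sum_bound N HN) as Hc.
  unfold pJL6 in Hp.
  set (D := cbrt (K0 N + K1 N) + cbrt (K0 N - K1 N) + 3 * N ^ 2 + 32) in *.
  assert (HD : D < 3 * (N-8)^2) by (unfold D; nra).
  set (S := sqrt D) in *.
  assert (H3 : 0 < sqrt 3) by (apply sqrt_lt_R0; lra).
  assert (H33 : sqrt 3 * sqrt 3 = 3) by (apply sqrt_sqrt; lra).
  assert (HS0 : 0 <= S) by apply sqrt_pos.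
  assert (HSB : S < (N-8) * sqrt 3).
  { destruct (Rle_or_lt D 0) as [h|h].
    - unfold S; rewrite sqrt_neg_0 by auto. apply Rmult_lt_0_compat; lra.
    - assert (S*S = D) by (apply sqrt_sqrt; lra).
      assert (0 < (N-8)*sqrt 3) by (apply Rmult_lt_0_compat; lra).
      destruct (Rlt_or_le S ((N-8)*sqrt 3)) as [|h2]; auto.
      assert (H2 : (N-8)*sqrt 3 * ((N-8)*sqrt 3) <= S*S) by (apply Rmult_le_compat; lra).
      replace ((N-8)*sqrt 3 * ((N-8)*sqrt 3)) with ((N-8)^2 * (sqrt 3 * sqrt 3)) in H2 by ring.
      rewrite H33 in H2. lra. }
  clearbody S D.
  set (d := (N-8)*sqrt 3 - S).
  assert (Hd : 0 < d) by (unfold d; lra).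
  assert (Hdle : d <= (N-8)*sqrt 3) by (unfold d; lra).
  assert (E : ((N + 4) * sqrt 3 - S) / ((N - 8) * sqrt 3 - S) = 1 + 12 * sqrt 3 / d)
    by (unfold d; field; lra).
  rewrite E in Hp.
  assert (Hq : 12 / (N-8) <= 12 * sqrt 3 / d).
  { replace (12 / (N-8)) with (12 * sqrt 3 / ((N-8) * sqrt 3)) by (field; lra).
    apply Rmult_le_compat_l; [lra|]. apply Rinv_le_contravar; lra. }
  assert (H12 : 0 < 12 / (N-8)) by (apply Rdiv_lt_0_compat; lra).
  split; [lra|].
  assert (Hp1 : 12/(N-8) < p - 1) by lra.
  apply (Rmult_lt_reg_r (p-1)); [lra|].
  replace (6/(p-1)*(p-1)) with 6 by (field; lra).
  assert (H : (N-6) * (12/(N-8)) <= (N-6)*(p-1)) by (apply Rmult_le_compat_l; lra).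
  replace ((N-6) * (12/(N-8))) with (12 * (N-6)/(N-8)) in H by (field; lra).
  assert (6 < 12 * (N-6)/(N-8)).
  { apply (Rmult_lt_reg_r (N-8)); [lra|]. replace (12*(N-6)/(N-8)*(N-8)) with (12*(N-6)) by (field; lra). lra. }
  lra.
Qed.

Lemma Rpower_up (q c : R) : 0 < q -> Rpower q (c + 1) = Rpower q c * q.
Proof. intros Hq. rewrite Rpower_plus, Rpower_1; auto. Qed.

Theorem lemma3p3 (n : nat) (p eps : R) :
  (15 <= n)%nat -> pJL6 (INR n) < p -> 0 < eps ->
  forall r : R, 0 < r ->
    - radial_lap (INR n) (u_in (INR n) p eps) r >= v_in (INR n) p eps r /\
    - radial_lap (INR n) (v_in (INR n) p eps) r >= w_in (INR n) p eps r /\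
    - radial_lap (INR n) (w_in (INR n) p eps) r >= Rpower (u_in (INR n) p eps r) p.
Proof.
  intros Hn Hp He r Hr.
  assert (HN : 15 <= INR n) by (apply le_INR in Hn; simpl in Hn; lra).
  set (N := INR n) in *.
  destruct (pJL_bound N p HN Hp) as [Hp1 Hm].
  assert (Hm0 : 0 < mexp p) by (unfold mexp; apply Rdiv_lt_0_compat; lra).
  assert (HmN : mexp p < N - 6) by (unfold mexp; exact Hm).
  assert (HL : 0 < Lconst N p) by (unfold Lconst, Rpower; apply exp_pos).
  assert (Hq : 0 < r^2 + eps) by nra.
  unfold u_in, v_in, w_in. cbv zeta.
  set (m := mexp p) in *. set (L := Lconst N p) in *.
  repeat rewrite lap_Kpow by auto.
  split; [|split].
  - clearbody m L. replace (- (m+2) / 2) with ((-m/2 - 2) + 1) by field. rewrite Rpower_up by auto.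
    assert (HE : 0 < Rpower (r^2+eps) (-m/2-2)) by apply exp_pos.
    set (E := Rpower (r^2+eps) (-m/2-2)) in *. clearbody E.
    apply Rle_ge, Rminus_le_0.
    replace (L * E * (-2 * (- m / 2) * N * (r ^ 2 + eps) - 4 * (- m / 2) * (- m / 2 - 1) * r ^ 2) -
      m * (N - 2 - m) * L * (E * (r ^ 2 + eps))) with (L*E*(m*(m+2))*eps) by (field).
    repeat apply Rmult_le_pos; lra.
  - clearbody m L. replace (- (m+4) / 2) with ((-(m+2)/2 - 2) + 1) by field. rewrite Rpower_up by auto.
    assert (HE : 0 < Rpower (r^2+eps) (-(m+2)/2-2)) by apply exp_pos.
    set (E := Rpower (r^2+eps) (-(m+2)/2-2)) in *. clearbody E.
    apply Rle_ge, Rminus_le_0.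
    match goal with |- 0 <= ?a - ?b => replace (a - b) with (m*(N-2-m)*L*E*((m+2)*(m+4))*eps) by field end.
    repeat apply Rmult_le_pos; lra.
  - set (P := m * (m + 2) * (m + 4) * (N - 2 - m) * (N - 4 - m) * (N - 6 - m)) in *.
    assert (HP : 0 < P) by (unfold P; clearbody m; repeat apply Rmult_lt_0_compat; lra).
    assert (HLP : Rpower L p = L * P).
    { unfold L, Lconst. fold m. fold P. rewrite Rpower_mult.
      replace (1 / (p - 1) * p) with (1/(p-1) + 1) by (field; lra).
      rewrite Rpower_plus, Rpower_1 by auto. reflexivity. }
    rewrite <- Rpower_mult_distr by (auto; apply exp_pos).
    rewrite HLP, Rpower_mult.
    replace (- m / 2 * p) with ((-(m+4)/2 - 2) + 1) by (unfold m, mexp; field; lra).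
    rewrite Rpower_up by auto.
    assert (HE : 0 < Rpower (r^2+eps) (-(m+4)/2-2)) by apply exp_pos.
    set (E := Rpower (r^2+eps) (-(m+4)/2-2)) in *. clearbody E.
    apply Rle_ge, Rminus_le_0. unfold P. clearbody m L.
    match goal with |- 0 <= ?a - ?b => replace (a - b) with (m*(m+2)*(N-2-m)*(N-4-m)*L*E*((m+4)*(m+6))*eps) by field end.
    repeat apply Rmult_le_pos; lra.
Qed.
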